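(* Let $M$ be a representation of $A$ and $L$ a vertex subrepresentation of $M$. Then $$\mathsf{F}_L(M)=\mathsf{F}_0(M/L)\cap\mathsf{F}_L(L).$$
   Context: $A=kQ/I$ finite-dimensional basic over algebraically closed $k$ of characteristic 0. $\mathsf{N}(M)$ is the convex hull in $\mathbb{R}^{Q_0}$ of dimension vectors of subrepresentations of $M$. For each vertex $\gamma$ of $\mathsf{N}(M)$ there is a unique subrepresentation of $M$ of dimension $\gamma$, called a vertex subrepresentation. For a vertex subrepresentation $L$ of $M$, $\mathsf{F}_L(M)$ denotes the dual (normal) cone of the vertex $\underline{\dim}L$: the cone of $\delta\in\mathbb{R}^{Q_0}$ with $\delta(\underline{\dim}L)=\max_{x\in\mathsf{N}(M)}\delta(x)$, where $\delta(\gamma)=\sum_v\delta(v)\gamma(v)$. Thus $\mathsf{F}_0(N)$ and $\mathsf{F}_N(N)$ are the dual cones of the vertices $0$ and $\underline{\dim}N$ of $\mathsf{N}(N)$. *)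

(* Defs.v *)
From HB Require Import structures.
From mathcomp Require Import all_boot all_order all_algebra.
Set Implicit Arguments. Unset Strict Implicit. Unset Printing Implicit Defensive.
Import Order.TTheory GRing.Theory Num.Theory.
Local Open Scope ring_scope.

Section Quiver.
Variables (k : fieldType) (Q0 Q1 : finType) (s t : Q1 -> Q0).

Fixpoint valid_path (u v : Q0) (arr : seq Q1) : bool :=
  match arr with
  | [::] => u == v
  | a :: rest => (s a == u) && valid_path (t a) v rest
  end.

(* a path: (start, end, arrows) *)
Definition path : Type := (Q0 * Q0 * seq Q1)%type.
Definition path_ok (p : path) : bool := valid_path p.1.1 p.1.2 p.2.

(* elements of kQ as formal k-linear combinations of paths *)
Definition kQ : Type := seq (k * path).
Definition coefQ (x : kQ) (p : path) : k := \sum_(c <- x | c.2 == p) c.1.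
Definition eqQ (x y : kQ) : Prop := forall p, path_ok p -> coefQ x p = coefQ y p.

Definition pcat (p q : path) : option path :=
  if p.1.2 == q.1.1 then Some (p.1.1, q.1.2, p.2 ++ q.2) else None.
Definition mulQ (x y : kQ) : kQ :=
  flatten [seq pmap (fun b => omap (fun pq => (a.1 * b.1, pq)) (pcat a.2 b.2)) y
          | a <- x].

(* a relation: a k-linear combination of paths from r_src to r_tgt *)
Record relation := Relation {
  r_src : Q0; r_tgt : Q0; r_terms : seq (k * seq Q1) }.
Definition rel_elt (r : relation) : kQ :=
  [seq (c.1, (r_src r, r_tgt r, c.2)) | c <- r_terms r].

(* x lies in the two-sided ideal of kQ generated by rels *)
Definition in_ideal (rels : seq relation) (x : kQ) : Prop :=
  exists g : seq (k * path * 'I_(size rels) * path),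
    eqQ x (flatten [seq mulQ (mulQ [:: (e.1.1.1, e.1.1.2)]
                                   (rel_elt (tnth (in_tuple rels) e.1.2)))
                             [:: (1, e.2)] | e <- g]).

(* I = <rels> is admissible: R_Q^m <= I <= R_Q^2 for some m >= 2 *)
Definition admissible (rels : seq relation) : Prop :=
  all (fun r => all (fun c => valid_path (r_src r) (r_tgt r) c.2 && (1 < size c.2)%N)
                    (r_terms r)) rels /\
  exists m : nat, (2 <= m)%N /\
    forall p : path, path_ok p -> size p.2 = m -> in_ideal rels [:: (1, p)].

(* Finite dimensional representations (row-vector convention:          *)
(* x in M_(s a) is sent to x *m rmap a in M_(t a)).                    *)
Record rep := Rep {
  rdim : Q0 -> nat;
  rmap : forall a : Q1, 'M[k]_(rdim (s a), rdim (t a)) }.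

Fixpoint path_mx (M : rep) (u v : Q0) (arr : seq Q1) : 'M[k]_(rdim M u, rdim M v) :=
  match arr with
  | [::] => if u == v then conform_mx 0 (1%:M : 'M[k]_(rdim M u)) else 0
  | a :: rest =>
      if s a == u then
        conform_mx (0 : 'M[k]_(rdim M u, rdim M (t a))) (rmap M a)
          *m path_mx M (t a) v rest
      else 0
  end.

(* M is a representation of A = kQ/<rels> *)
Definition rep_of (rels : seq relation) (M : rep) : Prop :=
  forall i : 'I_(size rels), let r := tnth (in_tuple rels) i in
    \sum_(c <- r_terms r) c.1 *: path_mx M (r_src r) (r_tgt r) c.2 = 0.

(* subrepresentations: a subspace (row space) at each vertex, stable by arrows *)
Record subrep (M : rep) := Subrep {
  sub_sp : forall v, 'M[k]_(rdim M v);
  sub_stable : forall a, (sub_sp (s a) *m rmap M a <= sub_sp (t a))%MS }.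

Definition subrep_rep (M : rep) (L : subrep M) : rep :=
  @Rep (fun v => \rank (sub_sp L v))
       (fun a => row_base (sub_sp L (s a)) *m rmap M a
                   *m pinvmx (row_base (sub_sp L (t a)))).

(* the quotient representation M/L (realised on complements of L) *)
Definition quot_rep (M : rep) (L : subrep M) : rep :=
  @Rep (fun v => \rank (sub_sp L v)^C)%MS
       (fun a => row_base (sub_sp L (s a))^C%MS *m rmap M a
                   *m proj_mx (sub_sp L (t a))^C%MS (sub_sp L (t a))
                   *m pinvmx (row_base (sub_sp L (t a))^C%MS)).

Variable R : realFieldType.

Definition subdimv (M : rep) (L : subrep M) : Q0 -> R :=
  fun v => (\rank (sub_sp L v))%:R.
Definition repdimv (M : rep) : Q0 -> R := fun v => (rdim M v)%:R.

Definition pairing (delta gamma : Q0 -> R) : R := \sum_v delta v * gamma v.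

Definition conv (P : (Q0 -> R) -> Prop) (x : Q0 -> R) : Prop :=
  exists (n : nat) (lam : 'I_n -> R) (p : 'I_n -> Q0 -> R),
    [/\ forall i, 0 <= lam i, \sum_i lam i = 1, forall i, P (p i)
      & forall v, x v = \sum_i lam i * p i v].

Definition newton (M : rep) : (Q0 -> R) -> Prop :=
  conv (fun g => exists L : subrep M, forall v, g v = subdimv L v).

Definition is_vertex (P : (Q0 -> R) -> Prop) (x : Q0 -> R) : Prop :=
  P x /\ forall (y z : Q0 -> R) (c : R), P y -> P z -> 0 < c -> c < 1 ->
    (forall v, x v = c * y v + (1 - c) * z v) -> forall v, y v = z v.

Definition Fcone (M : rep) (gamma : Q0 -> R) (delta : Q0 -> R) : Prop :=
  newton M gamma /\ forall x, newton M x -> pairing delta x <= pairing delta gamma.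

End Quiver.

(* Main.v *)
Require Import Defs.
From HB Require Import structures.
From mathcomp Require Import all_boot all_order all_algebra.
Import Order.TTheory GRing.Theory Num.Theory.
Local Open Scope ring_scope.

Set Implicit Arguments. Unset Strict Implicit.
Section Aux.
Variable (k : fieldType).

Lemma compl_cap n (U : 'M[k]_n) : ((U^C :&: U)%MS = 0).
Proof. by rewrite capmxC capmx_compl. Qed.

Lemma sub_CL m n (U : 'M[k]_n) (W : 'M[k]_(m, n)) : (W <= U^C + U)%MS.
Proof. by apply: submx_full; rewrite addsmxC addsmx_compl_full. Qed.

Lemma decompP m n (U : 'M[k]_n) (W : 'M[k]_(m, n)) :
  W *m proj_mx U^C%MS U + W *m proj_mx U U^C%MS = W.
Proof. by apply: add_proj_mx; [exact: compl_cap | exact: sub_CL]. Qed.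

Lemma ker_projE n (U : 'M[k]_n) : (kermx (proj_mx U^C%MS U) :=: U)%MS.
Proof.
apply/eqmxP/andP; split; last first.
  by rewrite sub_kermx proj_mx_0 //; exact: compl_cap.
set K := kermx _.
have KP : K *m proj_mx U^C%MS U = 0 by apply/eqP; rewrite -sub_kermx.
by rewrite -(decompP U K) KP add0r proj_mx_sub.
Qed.

Lemma rank_split m n (U : 'M[k]_n) (W : 'M[k]_(m, n)) :
  \rank W = (\rank (W *m proj_mx U^C%MS U) + \rank (W :&: U))%N.
Proof.
rewrite -(mxrank_mul_ker W (proj_mx U^C%MS U)).
by rewrite (cap_eqmx (eqmx_refl W) (ker_projE U)).
Qed.
End Aux.

Section Reps.
Variables (k : fieldType) (Q0 Q1 : finType) (s t : Q1 -> Q0).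
Variables (M : rep k s t) (L : subrep M).

Local Notation Lv v := (sub_sp L v).
Local Notation Bv v := (row_base (sub_sp L v)).
Local Notation Dv v := (row_base (sub_sp L v)^C%MS).
Local Notation Pv v := (proj_mx (sub_sp L v)^C%MS (sub_sp L v)).

Lemma fB a : rmap (subrep_rep L) a *m Bv (t a) = Bv (s a) *m rmap M a.
Proof.
apply: mulmxKpV; rewrite eq_row_base (eqmxMr _ (eq_row_base _)).
exact: sub_stable L a.
Qed.

Lemma qD a : rmap (quot_rep L) a *m Dv (t a) = Dv (s a) *m rmap M a *m Pv (t a).
Proof. by apply: mulmxKpV; rewrite eq_row_base proj_mx_sub. Qed.

Lemma liftB_stable (N1 : subrep (subrep_rep L)) a :
  (<<sub_sp N1 (s a) *m Bv (s a)>> *m rmap M a <= <<sub_sp N1 (t a) *m Bv (t a)>>)%MS.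
Proof.
rewrite (eqmxMr _ (genmxE _)) genmxE -mulmxA -fB mulmxA.
by rewrite submxMfree ?row_base_free //; exact: sub_stable N1 a.
Qed.

Definition liftB (N1 : subrep (subrep_rep L)) : subrep M :=
  @Subrep _ _ _ _ _ M (fun v => <<sub_sp N1 v *m Bv v>>%MS) (liftB_stable N1).

Lemma liftB_rank N1 v : \rank (sub_sp (liftB N1) v) = \rank (sub_sp N1 v).
Proof. by rewrite /= genmxE mxrankMfree ?row_base_free. Qed.

Lemma liftC_stable (N2 : subrep (quot_rep L)) a :
  ((sub_sp N2 (s a) *m Dv (s a) + Lv (s a))%MS *m rmap M a
     <= sub_sp N2 (t a) *m Dv (t a) + Lv (t a))%MS.
Proof.
rewrite addsmxMr addsmx_sub; apply/andP; split; last first.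
  exact: submx_trans (sub_stable L a) (addsmxSr _ _).
set x := _ *m rmap M a.
rewrite -(decompP (Lv (t a)) x); apply: addmx_sub_adds; last exact: proj_mx_sub.
have -> : x *m Pv (t a) = sub_sp N2 (s a) *m rmap (quot_rep L) a *m Dv (t a).
  by rewrite -mulmxA qD /x !mulmxA.
by rewrite submxMr //; exact: sub_stable N2 a.
Qed.

Definition liftC (N2 : subrep (quot_rep L)) : subrep M :=
  @Subrep _ _ _ _ _ M (fun v => (sub_sp N2 v *m Dv v + Lv v)%MS) (liftC_stable N2).

Lemma liftC_rank N2 v :
  \rank (sub_sp (liftC N2) v) = (\rank (sub_sp N2 v) + \rank (Lv v))%N.
Proof.
rewrite /= mxrank_disjoint_sum ?mxrankMfree ?row_base_free //.
apply/eqP; rewrite -submx0 -(compl_cap (Lv v)) capmxS //.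
by rewrite (submx_trans (submxMl _ _)) ?eq_row_base.
Qed.

Lemma restrL_stable (N : subrep M) a :
  (<<(sub_sp N (s a) :&: Lv (s a)) *m pinvmx (Bv (s a))>> *m rmap (subrep_rep L) a
     <= <<(sub_sp N (t a) :&: Lv (t a)) *m pinvmx (Bv (t a))>>)%MS.
Proof.
rewrite (eqmxMr _ (genmxE _)) genmxE.
rewrite -(submxMfree _ _ (row_base_free (Lv (t a)))).
set Y := (_ *m pinvmx (Bv (s a))).
have -> : Y *m rmap (subrep_rep L) a *m Bv (t a) = Y *m Bv (s a) *m rmap M a.
  by rewrite -mulmxA fB mulmxA.
rewrite /Y !mulmxKpV ?eq_row_base ?capmxSr //.
rewrite sub_capmx; apply/andP; split.
  exact: submx_trans (submxMr _ (capmxSl _ _)) (sub_stable N a).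
exact: submx_trans (submxMr _ (capmxSr _ _)) (sub_stable L a).
Qed.

Definition restrL (N : subrep M) : subrep (subrep_rep L) :=
  @Subrep _ _ _ _ _ (subrep_rep L)
    (fun v => <<(sub_sp N v :&: Lv v) *m pinvmx (Bv v)>>%MS) (restrL_stable N).

Lemma restrL_rank N v : \rank (sub_sp (restrL N) v) = \rank (sub_sp N v :&: Lv v).
Proof.
rewrite /= genmxE -(mxrankMfree _ (row_base_free (Lv v))).
by rewrite mulmxKpV ?eq_row_base ?capmxSr.
Qed.

Lemma quotC_stable (N : subrep M) a :
  (<<sub_sp N (s a) *m Pv (s a) *m pinvmx (Dv (s a))>> *m rmap (quot_rep L) a
     <= <<sub_sp N (t a) *m Pv (t a) *m pinvmx (Dv (t a))>>)%MS.
Proof.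
rewrite (eqmxMr _ (genmxE _)) genmxE.
rewrite -(submxMfree _ _ (row_base_free (Lv (t a))^C%MS)).
set Y := (_ *m pinvmx (Dv (s a))).
have -> : Y *m rmap (quot_rep L) a *m Dv (t a) = Y *m Dv (s a) *m rmap M a *m Pv (t a).
  by rewrite -mulmxA qD !mulmxA.
rewrite /Y !mulmxKpV ?eq_row_base ?proj_mx_sub //.
set W := sub_sp N (s a).
have -> : W *m Pv (s a) = W - W *m proj_mx (Lv (s a)) (Lv (s a))^C%MS.
  by rewrite -{2}(decompP (Lv (s a)) W) addrK.
rewrite mulmxBl mulmxBl.
rewrite [X in _ - X](proj_mx_0 (compl_cap _)) ?subr0; first by apply: submxMr; exact: sub_stable N a.
exact: submx_trans (submxMr _ (proj_mx_sub _ _ _)) (sub_stable L a).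
Qed.

Definition quotC (N : subrep M) : subrep (quot_rep L) :=
  @Subrep _ _ _ _ _ (quot_rep L)
    (fun v => <<sub_sp N v *m Pv v *m pinvmx (Dv v)>>%MS) (quotC_stable N).

Lemma quotC_rank N v : \rank (sub_sp (quotC N) v) = \rank (sub_sp N v *m Pv v).
Proof.
rewrite /= genmxE -(mxrankMfree _ (row_base_free (Lv v)^C%MS)).
by rewrite mulmxKpV ?eq_row_base ?proj_mx_sub.
Qed.

Lemma split_rank N v :
  \rank (sub_sp N v) = (\rank (sub_sp (quotC N) v) + \rank (sub_sp (restrL N) v))%N.
Proof. by rewrite quotC_rank restrL_rank -rank_split. Qed.

End Reps.

Section Conv.
Variables (Q0 : finType) (R : realFieldType).

Lemma conv_gen (P : (Q0 -> R) -> Prop) g : P g -> conv P g.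
Proof.
move=> Pg; exists 1%N, (fun _ => 1), (fun _ => g); split.
- by move=> _; exact: ler01.
- by rewrite big_ord1.
- by [].
- by move=> v; rewrite big_ord1 mul1r.
Qed.

Lemma conv_le (P : (Q0 -> R) -> Prop) d c x :
  (forall g, P g -> pairing d g <= c) -> conv P x -> pairing d x <= c.
Proof.
move=> Hg [n [lam [p [Hl Hs HP Hx]]]].
have -> : pairing d x = \sum_i lam i * pairing d (p i).
  rewrite /pairing.
  under eq_bigr => v _ do rewrite Hx mulr_sumr.
  rewrite exchange_big /=; apply: eq_bigr => i _.
  rewrite mulr_sumr; apply: eq_bigr => v _.
  by rewrite mulrA mulrA (mulrC (d v)).
rewrite -[c]mul1r -Hs mulr_suml; apply: ler_sum => i _.
by apply: ler_wpM2l; [exact: Hl | exact: Hg].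
Qed.
End Conv.

Section Fc.
Variables (k : fieldType) (Q0 Q1 : finType) (s t : Q1 -> Q0) (R : realFieldType).

Lemma FconeE (M : rep k s t) (N0 : subrep M) gamma delta :
  (forall v, gamma v = subdimv R N0 v) ->
  Fcone M gamma delta <->
  (forall N : subrep M, pairing delta (subdimv R N) <= pairing delta gamma).
Proof.
move=> Hg; split.
  by case=> _ H N; apply: H; apply: conv_gen; exists N.
move=> H; split; first by apply: conv_gen; exists N0.
move=> x; apply: conv_le => g [N HN].
have -> : pairing delta g = pairing delta (subdimv R N).
  by apply: eq_bigr => v _; rewrite HN.
exact: H.
Qed.

Lemma zero_stable (M : rep k s t) a :
  ((0 : 'M[k]_(rdim M (s a))) *m rmap M a <= (0 : 'M[k]_(rdim M (t a))))%MS.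
Proof. by rewrite mul0mx sub0mx. Qed.

Definition zero_sub (M : rep k s t) : subrep M := @Subrep _ _ _ _ _ M (fun v => 0) (@zero_stable M).

Lemma full_stable (M : rep k s t) a :
  ((1%:M : 'M[k]_(rdim M (s a))) *m rmap M a <= (1%:M : 'M[k]_(rdim M (t a))))%MS.
Proof. exact: submx1. Qed.

Definition full_sub (M : rep k s t) : subrep M := @Subrep _ _ _ _ _ M (fun v => 1%:M) (@full_stable M).

End Fc.

Theorem proposition4p9
  (k : closedFieldType) (Hchar : [pchar k] =i pred0)
  (Q0 Q1 : finType) (s t : Q1 -> Q0)
  (rels : seq (relation k Q0 Q1)) (Hadm : admissible s t rels)
  (R : realFieldType)
  (M : rep k s t) (HM : rep_of rels M)
  (L : subrep M) (HL : is_vertex (newton (R := R) M) (subdimv R L)) :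
  forall delta : Q0 -> R,
    Fcone M (subdimv R L) delta <->
    Fcone (quot_rep L) (fun _ => 0) delta /\
    Fcone (subrep_rep L) (repdimv R (subrep_rep L)) delta.
Proof.
move=> delta.
have E1 := @FconeE _ _ _ _ _ R M L (subdimv R L) delta (fun v => erefl).
have E2 := @FconeE _ _ _ _ _ R (quot_rep L) (zero_sub (quot_rep L)) (fun _ => 0) delta.
have E3 := @FconeE _ _ _ _ _ R (subrep_rep L) (full_sub (subrep_rep L))
   (repdimv R (subrep_rep L)) delta.
have {}E2 : _ := E2 (fun v => esym (congr1 (fun n : nat => n%:R) (mxrank0 _ _ _))).
have {}E3 : _ := E3 (fun v => esym (congr1 (fun n : nat => n%:R) (mxrank1 _ _))).
have Hmain : (forall N : subrep M, pairing delta (subdimv R N) <= pairing delta (subdimv R L)) <->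
  (forall N : subrep (quot_rep L), pairing delta (subdimv R N) <= pairing delta (fun _ => 0)) /\ (forall N : subrep (subrep_rep L), pairing delta (subdimv R N) <= pairing delta (repdimv R (subrep_rep L))); last first.
  split.
    by move=> /E1 /Hmain [A B]; split; [apply/E2 | apply/E3].
  by case=> /E2 A /E3 B; apply/E1/Hmain.
have P0 : pairing delta (fun _ => 0) = 0 by apply: big1 => v _; rewrite mulr0.
have Padd : forall f g : Q0 -> R, pairing delta (fun v => f v + g v) =
    pairing delta f + pairing delta g.
  by move=> f g; rewrite /pairing -big_split; apply: eq_bigr => v _; rewrite mulrDr.
rewrite P0; split.
  move=> H; split.
    move=> N2; have := H (liftC N2).
    have -> : pairing delta (subdimv R (liftC N2)) =
        pairing delta (subdimv R N2) + pairing delta (subdimv R L).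
      rewrite -Padd; apply: eq_bigr => v _.
      by rewrite /subdimv liftC_rank natrD.
    by move=> h; rewrite -(lerD2r (pairing delta (subdimv R L))) add0r.
  move=> N1; have := H (liftB N1).
  have -> : pairing delta (subdimv R (liftB N1)) = pairing delta (subdimv R N1).
    by apply: eq_bigr => v _; rewrite /subdimv liftB_rank.
  by [].
case=> H2 H1 N.
have -> : pairing delta (subdimv R N) =
    pairing delta (subdimv R (quotC L N)) + pairing delta (subdimv R (restrL L N)).
  rewrite -Padd; apply: eq_bigr => v _.
  by rewrite /subdimv (@split_rank _ _ _ _ _ M L N v) natrD.
rewrite -[X in _ <= X]add0r; apply: lerD; first exact: H2.
exact: H1.
Qed.
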